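(* Let $\sigma\in\mathcal E$ be a coordinated equilibrium strategy of $\langle\Gamma,M\rangle$. Then $\pi(\sigma,\sigma)\le\max\{\pi(\sigma_L,\sigma_L),\pi(\sigma_R,\sigma_R)\}$.
   Context: Game $\langle\Gamma,M\rangle$. Two players; each player's type is drawn independently from a distribution on $U=[0,1]$ with continuous CDF $F$ and density $f$ with $f(u)>0$ for all $u\in[0,1]$. Each player chooses an action in $\{L,R\}$; a player of type $u$ gets $1-u$ if both choose $L$, $u$ if both choose $R$, and $0$ otherwise. Before choosing actions, players simultaneously send publicly observed costless messages from a finite set $M$ with $|M|\ge4$. A strategy is $\sigma=(\mu,\xi)$ with $\mu:U\to\Delta(M)$ measurable ($\mu_u(m)$ = probability type $u$ sends $m$) and $\xi:M\times M\to[0,1]$: a player who sent $m$ and observes $m'$ plays $L$ iff her type $u\le\xi(m,m')$. $\Sigma$ is the set of strategies. $\bar\mu(m)=\int_0^1\mu_u(m)f(u)du$, $\mathrm{supp}(\bar\mu)=\{m:\bar\mu(m)>0\}$. Write $\xi(m,m')=L$ if $\xi(m,m')\ge\sup\{u:\mu_u(m)>0\}$ and $\xi(m,m')=R$ if $\xi(m,m')\le\inf\{u:\mu_u(m)>0\}$. Payoffs: $\pi_{u,v}(\sigma,\sigma')=\sum_{m,m'}\mu_u(m)\mu'_v(m')[(1-u)\mathbf 1\{u\le\xi(m,m')\}\mathbf 1\{v\le\xi'(m',m)\}+u\mathbf 1\{u>\xi(m,m')\}\mathbf 1\{v>\xi'(m',m)\}]$, $\pi_u(\sigma,\sigma')=\int_0^1\pi_{u,v}(\sigma,\sigma')f(v)dv$,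 $\pi(\sigma,\sigma')=\int_0^1\pi_u(\sigma,\sigma')f(u)du$. $\sigma\in\mathcal E$ (equilibrium strategy) if $\pi_u(\sigma,\sigma)\ge\pi_u(\sigma',\sigma)$ for all $u$, $\sigma'$. $\sigma$ is coordinated if for all $m,m'\in\mathrm{supp}(\bar\mu)$, either $\xi(m,m')=\xi(m',m)=L$ or $\xi(m,m')=\xi(m',m)=R$. Fix distinct $m_L,m_R\in M$. $\mu^*(u)=m_L$ (with probability one) if $u\le1/2$ and $\mu^*(u)=m_R$ if $u>1/2$. $\xi_L(m,m')=0$ if $m=m'=m_R$ and $1$ otherwise; $\xi_R(m,m')=1$ if $m=m'=m_L$ and $0$ otherwise. $\sigma_L=(\mu^*,\xi_L)$, $\sigma_R=(\mu^*,\xi_R)$. *)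

(* Defs.v *)
From HB Require Import structures.
From mathcomp Require Import all_boot all_order all_algebra.
From mathcomp Require Import all_classical all_reals all_analysis.
Set Implicit Arguments. Unset Strict Implicit. Unset Printing Implicit Defensive.
Import Order.TTheory GRing.Theory Num.Theory.
Local Open Scope classical_set_scope.
Local Open Scope ring_scope.

Section Game.
Variables (R : realType) (M : finType).

(* A strategy sigma = (mu, xi): mu u m = probability that type u sends m;
   a player who sent m and observes m' plays L iff u <= xi m m'. *)
Record strat := Strat { smu : R -> M -> R ; sxi : M -> M -> R }.

Definition is_strategy (s : strat) : Prop :=
  (forall m, measurable_fun `[0%R : R, 1] (fun u => smu s u m)) /\
  (forall u, u \in `[0%R : R, 1] -> (forall m, 0 <= smu s u m) /\ \sum_m smu s u m = 1) /\
  (forall m m', 0 <= sxi s m m' <= 1).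

Definition ind (b : bool) : R := if b then 1 else 0.

Definition payoff_uv (s s' : strat) (u v : R) : R :=
  \sum_m \sum_m' smu s u m * smu s' v m' *
    ((1 - u) * ind (u <= sxi s m m') * ind (v <= sxi s' m' m)
     + u * ind (sxi s m m' < u) * ind (sxi s' m' m < v)).

Definition payoff_u (f : R -> R) (s s' : strat) (u : R) : R :=
  Rintegral lebesgue_measure `[0%R : R, 1] (fun v => payoff_uv s s' u v * f v).

Definition payoff (f : R -> R) (s s' : strat) : R :=
  Rintegral lebesgue_measure `[0%R : R, 1] (fun u => payoff_u f s s' u * f u).

Definition mubar (f : R -> R) (s : strat) (m : M) : R :=
  Rintegral lebesgue_measure `[0%R : R, 1] (fun u => smu s u m * f u).

Definition in_supp (f : R -> R) (s : strat) (m : M) : Prop := 0 < mubar f s m.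

Definition is_equilibrium (f : R -> R) (s : strat) : Prop :=
  is_strategy s /\
  forall u, u \in `[0%R : R, 1] -> forall s', is_strategy s' -> payoff_u f s' s u <= payoff_u f s s u.

Definition senders (s : strat) (m : M) : set R :=
  [set u | u \in `[0%R : R, 1] /\ 0 < smu s u m].

Definition xiL (s : strat) (m m' : M) : Prop := sup (senders s m) <= sxi s m m'.
Definition xiR (s : strat) (m m' : M) : Prop := sxi s m m' <= inf (senders s m).

Definition coordinated (f : R -> R) (s : strat) : Prop :=
  forall m m', in_supp f s m -> in_supp f s m' ->
    (xiL s m m' /\ xiL s m' m) \/ (xiR s m m' /\ xiR s m' m).

Definition is_type_density (f : R -> R) : Prop :=
  measurable_fun `[0%R : R, 1] f /\
  (forall u, u \in `[0%R : R, 1] -> 0 < f u) /\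
  lebesgue_measure.-integrable `[0%R : R, 1] (fun u => (f u)%:E) /\
  Rintegral lebesgue_measure `[0%R : R, 1] f = 1.

Definition mu_star (mL mR : M) (u : R) (m : M) : R :=
  if u <= 2^-1 then ind (m == mL) else ind (m == mR).

Definition xi_L (mR : M) (m m' : M) : R := if (m == mR) && (m' == mR) then 0 else 1.
Definition xi_R (mL : M) (m m' : M) : R := if (m == mL) && (m' == mL) then 1 else 0.

Definition sigma_L (mL mR : M) : strat := Strat (mu_star mL mR) (xi_L mR).
Definition sigma_R (mL mR : M) : strat := Strat (mu_star mL mR) (xi_R mL).

End Game.

(* Main.v *)
Require Import Defs.
From HB Require Import structures.
From mathcomp Require Import all_boot all_order all_algebra.
From mathcomp Require Import all_classical all_reals all_analysis.
From mathcomp Require Import lra ring.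
Set Implicit Arguments. Unset Strict Implicit. Unset Printing Implicit Defensive.
Import Order.TTheory GRing.Theory Num.Theory.
Local Open Scope classical_set_scope.
Local Open Scope ring_scope.

Module PA.


Section Infra.
Variable R : realType.
Local Notation D := ([set` `[0%R : R, 1%R]] : set R).
Local Notation mu := (@lebesgue_measure R).
Variable f : R -> R.
Hypothesis hf : is_type_density f.

Lemma mD : @measurable _ (measurableTypeR R) D.
Proof. exact: measurable_itv. Qed.

Lemma inD x : D x <-> 0 <= x <= 1.
Proof. by rewrite /= in_itv. Qed.

Definition good (g : R -> R) :=
  measurable_fun D g /\ exists K : R, forall x, D x -> `|g x| <= K.

Definition INT (g : R -> R) := \int[mu]_(x in D) (g x * f x).

Lemma good_int g : good g -> mu.-integrable D (EFin \o (fun x => g x * f x)).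
Proof.
case: hf => mf [fpos [fint _]] [mg [K hK]].
have bg : [bounded g x | x in D].
  exists K; split; first exact: num_real.
  move=> y Ky x Dx; apply: le_trans (hK x Dx) _; exact: ltW.
have := @integrableMr _ _ _ mu D mD g (fun x => (f x)%:E) mg bg fint.
congr (_.-integrable _ _); apply/funext => x /=; by rewrite EFinM.
Qed.

Lemma INT_add g1 g2 : good g1 -> good g2 ->
  INT (fun x => g1 x + g2 x) = INT g1 + INT g2.
Proof.
move=> h1 h2; rewrite /INT -(RintegralD mD (good_int h1) (good_int h2)).
by apply: eq_Rintegral => x _; rewrite mulrDl.
Qed.

Lemma INT_scale c g : good g -> INT (fun x => c * g x) = c * INT g.
Proof.
move=> h; rewrite /INT -(RintegralZl _ mD (good_int h)).
by apply: eq_Rintegral => x _; rewrite mulrA.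
Qed.

Lemma INT_ext g1 g2 : (forall x, D x -> g1 x = g2 x) -> INT g1 = INT g2.
Proof.
by move=> h; apply: eq_Rintegral => x /set_mem xD; rewrite h.
Qed.

Lemma INT_le g1 g2 : good g1 -> good g2 -> (forall x, D x -> g1 x <= g2 x) ->
  INT g1 <= INT g2.
Proof.
case: hf => _ [fpos _] h1 h2 h; apply: (le_Rintegral mD (good_int h1) (good_int h2)).
move=> x Dx; rewrite ler_pM2r ?h//; exact: fpos.
Qed.

Lemma INT_ge0 g : (forall x, D x -> 0 <= g x) -> 0 <= INT g.
Proof.
case: hf => _ [fpos _] h; apply: Rintegral_ge0 => x Dx.
by rewrite mulr_ge0 ?h// ltW// fpos.
Qed.

Lemma INT_one : INT (fun=> 1) = 1.
Proof.
case: hf => _ [_ [_ h]]; rewrite /INT -[RHS]h.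
by apply: eq_Rintegral => x _; rewrite mul1r.
Qed.

Lemma mD' : measurable D.
Proof. exact: measurable_itv. Qed.

Lemma good_cst c : good (fun=> c).
Proof. by split; [exact: measurable_cst|exists `|c|]. Qed.

Lemma good_id : good id.
Proof.
split; first exact: measurable_id.
by exists 1 => x /inD /andP[h0 h1]; rewrite ger0_norm.
Qed.

Lemma good_add g1 g2 : good g1 -> good g2 -> good (fun x => g1 x + g2 x).
Proof.
move=> [m1 [K1 h1]] [m2 [K2 h2]]; split; first exact: measurable_realfun.measurable_funD.
exists (K1 + K2) => x Dx; apply: le_trans (ler_normD _ _) _.
exact: lerD (h1 x Dx) (h2 x Dx).
Qed.

Lemma good_mul g1 g2 : good g1 -> good g2 -> good (fun x => g1 x * g2 x).
Proof.
move=> [m1 [K1 h1]] [m2 [K2 h2]]; split; first exact: measurable_realfun.measurable_funM.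
exists (K1 * K2) => x Dx; rewrite normrM.
by apply: ler_pM; rewrite ?normr_ge0 ?h1 ?h2.
Qed.

Lemma good_sum (I : Type) (r : seq I) (g : I -> R -> R) :
  (forall i, good (g i)) -> good (fun x => \sum_(i <- r) g i x).
Proof.
move=> hg; elim: r => [|i r IH].
  by under [fun x => _]funext do rewrite big_nil; exact: good_cst.
under [fun x => _]funext do rewrite big_cons.
exact: good_add.
Qed.

Lemma good_if (b : R -> bool) g1 g2 : measurable_fun D b -> good g1 -> good g2 ->
  good (fun x => if b x then g1 x else g2 x).
Proof.
move=> mb [m1 [K1 h1]] [m2 [K2 h2]]; split.
  apply: (measurable_fun_if mD' mb).
  - by apply: (measurable_funS mD' _ m1) => x [].
  by apply: (measurable_funS mD' _ m2) => x [].
exists (Num.max K1 K2) => x Dx; case: (b x).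
  by rewrite le_max h1.
by rewrite le_max h2 ?orbT.
Qed.

Lemma good_ind (b : R -> bool) : measurable_fun D b -> good (fun x => ind R (b x)).
Proof. by move=> mb; apply: (good_if (g1:=fun=> 1) (g2:=fun=>0)) => //; exact: good_cst. Qed.

Lemma good_le t : good (fun x => ind R (x <= t)).
Proof. apply: good_ind; apply: measurable_realfun.measurable_fun_ler; [exact: measurable_id|exact: measurable_cst]. Qed.

Lemma good_lt t : good (fun x => ind R (t < x)).
Proof. apply: good_ind; apply: measurable_realfun.measurable_fun_ltr; [exact: measurable_cst|exact: measurable_id]. Qed.

Lemma INT_sum (I : Type) (r : seq I) (g : I -> R -> R) :
  (forall i, good (g i)) -> INT (fun x => \sum_(i <- r) g i x) = \sum_(i <- r) INT (g i).
Proof.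
move=> hg; elim: r => [|i r IH].
  rewrite big_nil (INT_ext (g2 := fun=> 0 * 1)); last by move=> x _; rewrite big_nil mul0r.
  by rewrite INT_scale ?mul0r //; exact: good_cst.
rewrite big_cons -IH -INT_add //; last exact: good_sum.
by apply: INT_ext => x _; rewrite big_cons.
Qed.


Lemma INT_ae0 h g : good h -> good g -> (forall x, D x -> 0 <= h x) -> INT h = 0 ->
  (forall x, D x -> h x = 0 -> g x = 0) -> INT g = 0.
Proof.
move=> gh gg h0 Ih hg.
have fpos := (proj1 (proj2 hf)).
have Ifin := integrable_fin_num mD (good_int gh).
have I0 : (\int[mu]_(x in D) (h x * f x)%:E = 0)%E.
  by rewrite -(fineK Ifin); move: Ih; rewrite /INT /Rintegral => ->.
have Iabs : (\int[mu]_(x in D) `|(h x * f x)%:E| = 0)%E.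
  rewrite -I0; apply: eq_integral => x /set_mem Dx.
  by rewrite gee0_abs // lee_fin mulr_ge0 ?h0 // ltW // fpos.
have ae1 : ae_eq mu D (fun x => (h x * f x)%:E) (cst 0%E).
  apply/(ae_eq_integral_abs mu mD); last exact: Iabs.
  apply/measurable_realfun.measurable_EFinP; apply: measurable_realfun.measurable_funM.
  + exact: gh.1.
  + exact: hf.1.
have ae2 : ae_eq mu D (fun x => (g x * f x)%:E) (cst 0%E).
  apply: filterS ae1 => x hx Dx.
  have : h x * f x = 0 by have := hx Dx; rewrite /cst => -[].
  move/eqP; rewrite mulf_eq0 => /orP[/eqP hx0|/eqP fx0].
    by rewrite /cst hg // mul0r.
  by have := fpos x Dx; rewrite fx0 ltxx.
rewrite /INT /Rintegral (ae_eq_integral (cst 0%E) _ mD _ _ ae2) //.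
- by rewrite integral0.
- apply/measurable_realfun.measurable_EFinP; apply: measurable_realfun.measurable_funM.
  + exact: gg.1.
  + exact: hf.1.
Qed.

Lemma INT_pt (x0 : R) g1 g2 : good g1 -> good g2 ->
  (forall x, D x -> x <> x0 -> g1 x = g2 x) -> INT g1 = INT g2.
Proof.
move=> gg1 gg2 h.
have ae2 : ae_eq mu D (fun x => (g1 x * f x)%:E) (fun x => (g2 x * f x)%:E).
  exists [set x0]; split.
  - exact: (measurable_set1 x0).
  - exact: lebesgue_measure_set1.
  - move=> t /= /not_implyP [Dt ne]; apply: contrapT => tx0.
    by apply: ne; rewrite h.
rewrite /INT /Rintegral (ae_eq_integral _ _ mD _ _ ae2) //.
- apply/measurable_realfun.measurable_EFinP; apply: measurable_realfun.measurable_funM.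
  + exact: gg1.1.
  + exact: hf.1.
- apply/measurable_realfun.measurable_EFinP; apply: measurable_realfun.measurable_funM.
  + exact: gg2.1.
  + exact: hf.1.
Qed.


End Infra.

End PA.
Import PA.

Module PB.


Section Game.
Variables (R : realType) (M : finType) (f : R -> R).
Hypothesis hf : is_type_density f.
Local Notation D := ([set` `[0%R : R, 1%R]] : set R).
Local Notation INT := (INT f).
Local Notation good := (@good R).

Lemma good_sub g1 g2 : good g1 -> good g2 -> good (fun x => g1 x - g2 x).
Proof.
move=> h1 h2; have -> : (fun x => g1 x - g2 x) = (fun x => g1 x + (-1) * g2 x).
  by apply/funext => x; rewrite mulN1r.
by apply: good_add => //; apply: good_mul => //; exact: good_cst.
Qed.

Lemma mu_bnd (s : strat R M) : is_strategy s -> forall u, D u -> forall m, 0 <= smu s u m <= 1.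
Proof.
case=> _ [hs _] u Du m; have [h0 h1] := hs u Du.
rewrite h0 /= -h1 (bigD1 m) //= lerDl sumr_ge0 // => i _; exact: h0.
Qed.

Lemma good_mu (s : strat R M) m : is_strategy s -> good (fun u => smu s u m).
Proof.
move=> hs; split; first exact: hs.1 m.
exists 1 => u Du; have /andP[h0 h1] := mu_bnd hs Du m.
by rewrite ger0_norm.
Qed.

Ltac gd := repeat (first [ apply: good_sub | apply: good_add | apply: good_mul
  | apply: good_sum => ? | apply: good_le | apply: good_lt | apply: good_id
  | apply: good_cst | (apply: good_mu; assumption) ]).

Definition KLw (s : strat R M) m m' (w : R -> R) :=
  INT (fun u => smu s u m * w u * ind R (u <= sxi s m m')).
Definition KRw (s : strat R M) m m' (w : R -> R) :=
  INT (fun u => smu s u m * w u * ind R (sxi s m m' < u)).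

Lemma payoff_u_eq (s1 s2 : strat R M) u : is_strategy s2 ->
  payoff_u f s1 s2 u = \sum_m \sum_m'
    (smu s1 u m * (1 - u) * ind R (u <= sxi s1 m m') * KLw s2 m' m (fun=> 1)
     + smu s1 u m * u * ind R (sxi s1 m m' < u) * KRw s2 m' m (fun=> 1)).
Proof.
move=> hs2.
have -> : payoff_u f s1 s2 u = INT (payoff_uv s1 s2 u) by [].
rewrite /payoff_uv (INT_sum hf); last by move=> m; gd.
apply: eq_bigr => m _; rewrite (INT_sum hf); last by move=> m'; gd.
apply: eq_bigr => m' _.
rewrite (@INT_ext R f _ ( fun v =>
   (smu s1 u m * (1 - u) * ind R (u <= sxi s1 m m')) *
      (smu s2 v m' * 1 * ind R (v <= sxi s2 m' m)) +
   (smu s1 u m * u * ind R (sxi s1 m m' < u)) *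
      (smu s2 v m' * 1 * ind R (sxi s2 m' m < v)))); last first.
  by move=> v _; ring.
rewrite (INT_add hf); [|gd|gd].
by rewrite !(INT_scale hf); [|gd|gd].
Qed.

Lemma payoff_eq (s : strat R M) : is_strategy s ->
  payoff f s s = \sum_m \sum_m'
    (KLw s m m' (fun u => 1 - u) * KLw s m' m (fun=> 1)
     + KRw s m m' id * KRw s m' m (fun=> 1)).
Proof.
move=> hs.
have -> : payoff f s s = INT (payoff_u f s s) by [].
rewrite (@INT_ext R f _ _ (fun u x => payoff_u_eq s u hs)).
rewrite (INT_sum hf); last by move=> m; gd.
apply: eq_bigr => m _; rewrite (INT_sum hf); last by move=> m'; gd.
apply: eq_bigr => m' _.
rewrite (@INT_ext R f _ (fun u =>
   KLw s m' m (fun=> 1) * (smu s u m * (1 - u) * ind R (u <= sxi s m m')) +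
   KRw s m' m (fun=> 1) * (smu s u m * id u * ind R (sxi s m m' < u)))); last first.
  by move=> v _ /=; ring.
rewrite (INT_add hf); [|gd|gd].
rewrite !(INT_scale hf); [|gd|gd].
by rewrite /KLw /KRw; ring.
Qed.

Lemma INT0 : INT (fun=> 0) = 0.
Proof.
rewrite (@INT_ext R f _ (fun _ => 0 * 1)); last by move=> x _; rewrite mul0r.
by rewrite (INT_scale hf) ?mul0r //; exact: good_cst.
Qed.

Lemma ind01 (b : bool) : ind R b = 0 \/ ind R b = 1.
Proof. by rewrite /ind; case: b; [right|left]. Qed.

Lemma mubar_ge0 (s : strat R M) m : is_strategy s -> 0 <= mubar f s m.
Proof.
move=> hs; apply: (INT_ge0 hf) => u Du.
by have /andP[] := mu_bnd hs Du m.
Qed.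

Lemma K_null (s : strat R M) m m' w : is_strategy s -> good w ->
  (forall u, D u -> 0 <= w u <= 1) -> mubar f s m = 0 ->
  KLw s m m' w = 0 /\ KRw s m m' w = 0.
Proof.
move=> hs gw w01 q0.
have H (b : R -> bool) : good (fun u => ind R (b u)) ->
    INT (fun u => smu s u m * w u * ind R (b u)) = 0.
  move=> gb.
  apply/eqP; rewrite eq_le; apply/andP; split; last first.
    apply: (INT_ge0 hf) => u Du; have /andP[a1 a2] := mu_bnd hs Du m.
    have /andP[b1 b2] := w01 u Du.
    by case: (ind01 (b u)) => ->; rewrite ?mulr0 ?mulr1 // mulr_ge0.
  rewrite -q0; apply: (INT_le hf).
  - apply: good_mul; first by apply: good_mul => //; exact: good_mu.
    exact: gb.
  - exact: good_mu.
  move=> u Du; have /andP[a1 a2] := mu_bnd hs Du m.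
  have /andP[b1 b2] := w01 u Du.
  case: (ind01 (b u)) => ->; rewrite ?mulr0 ?mulr1 //.
  by rewrite -{2}(mulr1 (smu s u m)) ler_wpM2l.
by split; apply: H; [exact: good_le|exact: good_lt].
Qed.

Lemma sender_le_sup (s : strat R M) m u : D u -> 0 < smu s u m ->
  u <= sup (senders s m).
Proof.
move=> Du pos; apply: ub_le_sup; last by split.
by exists 1 => y [/inD /andP[_ ->] _].
Qed.

Lemma sender_ge_inf (s : strat R M) m u : D u -> 0 < smu s u m ->
  inf (senders s m) <= u.
Proof.
move=> Du pos; apply: ge_inf; last by split.
by exists 0 => y [/inD /andP[-> _] _].
Qed.

Lemma K_L (s : strat R M) m m' w : is_strategy s -> good w ->
  xiL s m m' ->
  KLw s m m' w = INT (fun u => smu s u m * w u) /\ KRw s m m' w = 0.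
Proof.
move=> hs gw hL; split.
  apply: (INT_ext) => u Du; have /andP[a1 _] := mu_bnd hs Du m.
  move: a1; rewrite le_eqVlt => /orP[/eqP <-|pos]; first by rewrite !mul0r.
  have := le_trans (sender_le_sup Du pos) hL.
  by rewrite /ind => ->; rewrite mulr1.
rewrite -INT0; apply: (INT_ext) => u Du; have /andP[a1 _] := mu_bnd hs Du m.
move: a1; rewrite le_eqVlt => /orP[/eqP <-|pos]; first by rewrite !mul0r.
have := le_trans (sender_le_sup Du pos) hL.
by rewrite /ind leNgt => /negbTE ->; rewrite mulr0.
Qed.

Lemma K_R (s : strat R M) m m' w : is_strategy s -> good w ->
  xiR s m m' ->
  KLw s m m' w = 0 /\ KRw s m m' w = INT (fun u => smu s u m * w u).
Proof.
move=> hs gw hR; split.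
  rewrite -INT0; apply: (INT_pt hf (x0 := sxi s m m')).
  - by gd; exact: gw.
  - exact: good_cst.
  move=> u Du ne; have /andP[a1 _] := mu_bnd hs Du m.
  move: a1; rewrite le_eqVlt => /orP[/eqP <-|pos]; first by rewrite !mul0r.
  have h1 := le_trans hR (sender_ge_inf Du pos).
  have h2 : sxi s m m' < u by rewrite lt_neqAle h1 andbT; apply/eqP => e; apply: ne.
  by rewrite /ind leNgt h2 mulr0.
apply: (INT_pt hf (x0 := sxi s m m')).
- by gd; exact: gw.
- by gd; exact: gw.
move=> u Du ne; have /andP[a1 _] := mu_bnd hs Du m.
move: a1; rewrite le_eqVlt => /orP[/eqP <-|pos]; first by rewrite !mul0r.
have h1 := le_trans hR (sender_ge_inf Du pos).
have h2 : sxi s m m' < u by rewrite lt_neqAle h1 andbT; apply/eqP => e; apply: ne.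
by rewrite /ind h2 mulr1.
Qed.

End Game.

End PB.
Import PB.

Module PC.


Section Main.
Variables (R : realType) (M : finType) (f : R -> R).
Hypothesis hf : is_type_density f.
Local Notation D := ([set` `[0%R : R, 1%R]] : set R).
Local Notation INT := (INT f).
Local Notation good := (@good R).
Variable s : strat R M.
Hypothesis hs : is_strategy s.
Hypothesis hC : coordinated f s.

Ltac gd := repeat (first [ apply: good_sub | apply: good_add | apply: good_mul
  | apply: good_sum => ? | apply: good_le | apply: good_lt | apply: good_id
  | apply: good_cst | (apply: good_mu; assumption) ]).

Definition q m := mubar f s m.
Definition S m : bool := 0 < q m.
Definition Lc m m' : bool := `[< xiL s m m' /\ xiL s m' m >].
Definition E m := INT (fun u => smu s u m * (1 - u)).
Definition G m := INT (fun u => smu s u m * u).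
Definition a m := \sum_m' (if S m' && Lc m m' then q m' else 0).

Lemma q_ge0 m : 0 <= q m.
Proof. rewrite /q; exact: (mubar_ge0 hf m hs). Qed.

Lemma q_notS m : ~~ S m -> q m = 0.
Proof. by rewrite /S -leNgt => h; apply/le_anti; rewrite h q_ge0. Qed.

Lemma q_sum : \sum_m q m = 1.
Proof.
rewrite /q /mubar.
have -> : \sum_m Rintegral lebesgue_measure `[0%R, 1] (fun u => smu s u m * f u)
   = \sum_m INT (fun u => smu s u m) by [].
rewrite -(INT_sum hf); last by move=> m; gd.
rewrite -(INT_one hf); apply: INT_ext => u Du.
by case: hs => _ [/(_ u Du) [_ ->] _].
Qed.

Lemma sum_S : \sum_m (if S m then q m else 0) = 1.
Proof.
rewrite -q_sum; apply: eq_bigr => m _; case: ifP => // /negbT h.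
by rewrite q_notS.
Qed.

Lemma good_1u : good (fun u => 1 - u).
Proof. by gd. Qed.

Lemma w1u u : D u -> 0 <= 1 - u <= 1.
Proof. by move/inD => /andP[h0 h1]; apply/andP; split; lra. Qed.

Lemma wid u : D u -> 0 <= id u <= 1.
Proof. by move/inD. Qed.

Lemma w1 u : D u -> 0 <= (fun=> 1 : R) u <= 1.
Proof. by move=> _; rewrite ler01 lexx. Qed.

Lemma KL1 m m' : xiL s m m' -> KLw f s m m' (fun=> 1) = q m.
Proof.
move=> h; rewrite (K_L hf hs (good_cst 1) h).1.
by apply: INT_ext => u _; rewrite mulr1.
Qed.

Lemma KR1 m m' : xiR s m m' -> KRw f s m m' (fun=> 1) = q m.
Proof.
move=> h; rewrite (K_R hf hs (good_cst 1) h).2.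
by apply: INT_ext => u _; rewrite mulr1.
Qed.

Lemma term_eq m m' :
  KLw f s m m' (fun u => 1 - u) * KLw f s m' m (fun=> 1)
     + KRw f s m m' id * KRw f s m' m (fun=> 1)
  = if S m && S m' then (if Lc m m' then E m * q m' else G m * q m') else 0.
Proof.
have [Sm|nSm] := boolP (S m); last first.
  have q0 := q_notS nSm.
  rewrite (K_null hf m' hs good_1u w1u q0).1 (K_null hf m' hs (@good_id R) wid q0).2.
  by rewrite !mul0r addr0.
have [Sm'|nSm'] := boolP (S m'); last first.
  have q0 := q_notS nSm'.
  rewrite (K_null hf m hs (good_cst 1) w1 q0).1 (K_null hf m hs (good_cst 1) w1 q0).2.
  by rewrite !mulr0 addr0.
rewrite /=.
have [/asboolP [h1 h2]|nL] := boolP (Lc m m').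
  rewrite (K_L hf hs good_1u h1).1 (K_L hf hs (@good_id R) h1).2 KL1 //.
  by rewrite mul0r addr0.
case: (hC Sm Sm') => [[h1 h2]|[h1 h2]].
  by move: nL; have -> : Lc m m' by apply/asboolP.
rewrite (K_R hf hs good_1u h1).1 (K_R hf hs (@good_id R) h1).2 KR1 //.
by rewrite mul0r add0r.
Qed.

Lemma W_eq : payoff f s s = \sum_m (if S m then a m * E m + (1 - a m) * G m else 0).
Proof.
rewrite (payoff_eq hf hs); apply: eq_bigr => m _.
under eq_bigr do rewrite term_eq.
have [Sm|nSm] := boolP (S m); last by rewrite big1 // => m' _; rewrite (negbTE nSm).
rewrite /=.
rewrite (eq_bigr (fun m' => E m * (if S m' && Lc m m' then q m' else 0) +
   G m * ((if S m' then q m' else 0) - (if S m' && Lc m m' then q m' else 0)))); last first.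
  by move=> m' _; case: (S m'); case: (Lc m m') => /=; ring.
by rewrite big_split /= -!mulr_sumr sumrB sum_S /a; ring.
Qed.

Definition g m (u : R) := a m * (1 - u) + (1 - a m) * u.

Lemma INTg m : INT (fun u => smu s u m * g m u) = a m * E m + (1 - a m) * G m.
Proof.
rewrite (@INT_ext R f _ (fun u => a m * (smu s u m * (1 - u)) + (1 - a m) * (smu s u m * u))); last first.
  by move=> u _; rewrite /g; ring.
by rewrite (INT_add hf) ?(INT_scale hf) //; gd.
Qed.

Definition dev (m0 : M) : strat R M :=
  Strat (fun (_ : R) m => ind R (m == m0)) (fun m m' => if Lc m m' then 1 else 0).

Lemma sum_ind (m0 : M) : \sum_m ind R (m == m0) = 1.
Proof.
rewrite (bigD1 m0) //= big1; first by rewrite /ind eqxx addr0.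
by move=> m /negbTE hm; rewrite /ind hm.
Qed.

Lemma dev_strat m0 : is_strategy (dev m0).
Proof.
split; first by move=> m; exact: measurable_cst.
split.
  move=> u _; split; last exact: sum_ind.
  by move=> m; rewrite /= /ind; case: (_ == _).
by move=> m m' /=; case: (Lc m m'); rewrite ?lexx ?ler01.
Qed.

Lemma dev_pay m0 u : S m0 -> D u -> payoff_u f (dev m0) s u = g m0 u.
Proof.
move=> Sm0 Du; have /inD /andP[u0 u1] := Du.
rewrite (payoff_u_eq hf (dev m0) u hs) (bigD1 m0) //= [X in _ + X]big1; last first.
  move=> m /negbTE hm; apply: big1 => m' _; rewrite /ind hm; ring.
rewrite addr0.
rewrite (eq_bigr (fun m' => (if S m' && Lc m0 m' then q m' else 0) * (1 - u) +
   ((if S m' then q m' else 0) - (if S m' && Lc m0 m' then q m' else 0)) * u)); last first.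
  move=> m' _; rewrite /ind eqxx.
  have [Sm'|nSm'] := boolP (S m'); last first.
    have q0 := q_notS nSm'.
    rewrite (K_null hf m0 hs (good_cst 1) w1 q0).1 (K_null hf m0 hs (good_cst 1) w1 q0).2 /=.
    ring.
  have [/asboolP [h1 h2]|nL] := boolP (Lc m0 m').
    by rewrite KL1 //= u1 (ltNge 1 u) u1 /=; ring.
  have [|[h1 h2]] : (xiL s m0 m' /\ xiL s m' m0) \/ (xiR s m0 m' /\ xiR s m' m0).
    exact: hC.
  by move=> hL; move: nL; have -> : Lc m0 m' by apply/asboolP.
  rewrite (K_R hf hs (good_cst 1) h2).1 KR1 //=.
  move: u0; rewrite le_eqVlt => /orP[/eqP <-|up]; first by rewrite ltxx; ring.
  by rewrite up; ring.
by rewrite big_split /= -!mulr_suml sumrB sum_S /g /a; ring.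
Qed.

End Main.

End PC.
Import PC.

Module PD.


Lemma alg_ineq (R : realType) (x y p pr aA bB : R) : 0 <= x -> 0 <= y -> y <= pr -> 0 <= p -> 0 <= pr ->
  p + pr = 1 -> 0 <= bB -> aA <= 1 -> aA * p - p * p <= bB * pr -> aA * x - bB * y <= Num.max (x - p * y) (p * x).
Proof.
move=> x0 y0 ypr p0 pr0 ppr B0 A1 cons.
have [hAp|hAp] := leP aA p.
  have h1 : aA * x <= p * x by rewrite ler_wpM2r.
  have h2 : 0 <= bB * y by rewrite mulr_ge0.
  by rewrite le_max; apply/orP; right; lra.
set Mx := Num.max _ _.
have m1 : x - p * y <= Mx by rewrite le_max lexx.
have m2 : p * x <= Mx by rewrite le_max lexx orbT.
have prpos : 0 < pr by lra.
have k1 : (aA - p) * (x - p * y) <= (aA - p) * Mx by rewrite ler_wpM2l // subr_ge0 ltW.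
have k2 : (1 - aA) * (p * x) <= (1-aA) * Mx by rewrite ler_wpM2l // subr_ge0.
have k3 : (aA * p - p * p) * y <= (bB * pr) * y by rewrite ler_wpM2r.
have e : pr * (aA * x - bB * y) = (aA-p) * (x-p * y) + (1-aA) * (p * x) - ((bB * pr) * y - (aA * p - p * p) * y).
  have -> : pr = 1 - p by lra.
  ring.
have e2 : (aA - p) * Mx + (1-aA) * Mx = pr * Mx.
  have -> : pr = 1 - p by lra.
  ring.
have : pr * (aA * x - bB * y) <= pr * Mx by rewrite e -e2; lra.
by rewrite ler_pM2l.
Qed.

Section Main2.
Variables (R : realType) (M : finType) (f : R -> R).
Hypothesis hf : is_type_density f.
Local Notation D := ([set` `[0%R : R, 1%R]] : set R).
Local Notation INT := (INT f).
Local Notation good := (@good R).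
Variable s : strat R M.
Hypothesis hs : is_strategy s.
Hypothesis hC : coordinated f s.
Hypothesis hE : is_equilibrium f s.

Ltac gd := repeat (first [ apply: good_sub | apply: good_add | apply: good_mul
  | apply: good_sum => ? | apply: good_le | apply: good_lt | apply: good_id
  | apply: good_cst | (apply: good_mu; assumption) ]).

Local Notation q := (q f s).
Local Notation S := (S f s).
Local Notation a := (a f s).
Local Notation g := (g f s).
Local Notation Lc := (Lc s).

Lemma S_ex : exists m, S m.
Proof.
apply: contrapT => h.
have := sum_S hf hs; rewrite big1 => [|m _].
  by move/eqP; rewrite eq_sym oner_eq0.
by case: ifP => // Sm; exfalso; apply: h; exists m.
Qed.

Lemma a_ge0 m : 0 <= a m.
Proof. by apply: sumr_ge0 => m' _; case: ifP => // _; exact: (q_ge0 hf hs). Qed.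

Lemma a_le1 m : a m <= 1.
Proof.
rewrite -(sum_S hf hs); apply: ler_sum => m' _.
by case: (S m'); case: (Lc m m'); rewrite //= (q_ge0 hf hs).
Qed.

Lemma ext_max : exists mA, S mA /\ forall m, S m -> a m <= a mA.
Proof.
have [m0 Sm0] := S_ex.
case: (@arg_maxP _ _ M m0 S a Sm0) => mA SmA h; exists mA; split => //.
Qed.

Lemma ext_min : exists mB, S mB /\ forall m, S m -> a mB <= a m.
Proof.
have [m0 Sm0] := S_ex.
case: (@arg_minP _ _ M m0 S a Sm0) => mA SmA h; exists mA; split => //.
Qed.

Lemma good_ltc (t : R) : good (fun x => ind R (x < t)).
Proof.
apply: good_ind; apply: measurable_realfun.measurable_fun_ltr;
  [exact: measurable_id|exact: measurable_cst].
Qed.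

Lemma INT_sub g1 g2 : good g1 -> good g2 -> INT (fun x => g1 x - g2 x) = INT g1 - INT g2.
Proof.
move=> h1 h2.
rewrite (@INT_ext R f _ (fun x => g1 x + (-1) * g2 x)); last by move=> x _; ring.
rewrite (INT_add hf) //; last by gd.
by rewrite (INT_scale hf) //; ring.
Qed.

Lemma good_g m : good (g m).
Proof. by rewrite /PC.g; gd. Qed.

Lemma g_ge0 m u : D u -> 0 <= g m u.
Proof.
move/inD => /andP[u0 u1]; rewrite /PC.g.
have := a_ge0 m; have := a_le1 m => h1 h0.
by apply: addr_ge0; apply: mulr_ge0; lra.
Qed.

Variables (mA mB : M).
Hypotheses (SmA : S mA) (hA : forall m, S m -> a m <= a mA).
Hypotheses (SmB : S mB) (hB : forall m, S m -> a mB <= a m).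

Local Notation A := (a mA).
Local Notation B := (a mB).
Local Notation half := (2^-1 : R).

Definition Gm u := ind R (u <= half) * g mA u + ind R (half < u) * g mB u.

Lemma good_Gm : good Gm.
Proof. rewrite /Gm; gd; exact: good_g. Qed.

Lemma Gm_ge0 u : D u -> 0 <= Gm u.
Proof.
move=> Du; rewrite /Gm /ind; case: (u <= half); case: (half < u);
 rewrite ?mul1r ?mul0r ?addr0 ?add0r //; try exact: g_ge0.
by apply: addr_ge0; exact: g_ge0.
Qed.

Lemma Gm_le_pay u : D u -> Gm u <= payoff_u f s s u.
Proof.
move=> Du; rewrite /Gm /ind.
have H m : S m -> g m u <= payoff_u f s s u.
  move=> Sm; rewrite -(dev_pay hf hs hC (m0 := m)) //.
  by apply: hE.2 => //; exact: dev_strat.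
have [h|h] := boolP (u <= half).
  by rewrite ltNge h /= mul1r mul0r addr0; exact: H.
rewrite -ltNge in h; rewrite h mul0r add0r mul1r; exact: H.
Qed.

Lemma g_le_Gm m u : S m -> D u -> g m u <= Gm u.
Proof.
move=> Sm /inD /andP[u0 u1]; rewrite /Gm /ind /PC.g.
have := hA Sm; have := hB Sm => h1 h2.
have [h|h] := boolP (u <= half).
  rewrite ltNge h /= mul1r mul0r addr0.
  have : 0 <= (a mA - a m) * (1 - 2 * u).
    by apply: mulr_ge0; lra.
  lra.
rewrite -ltNge in h; rewrite h mul0r add0r mul1r.
have : 0 <= (a m - a mB) * (2 * u - 1).
  by apply: mulr_ge0; lra.
lra.
Qed.

Lemma W_eq2 : payoff f s s = \sum_m (if S m then INT (fun u => smu s u m * g m u) else 0).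
Proof. by rewrite (W_eq hf hs hC); apply: eq_bigr => m _; rewrite (INTg hf hs). Qed.

Lemma INTGm_le_W : INT Gm <= payoff f s s.
Proof.
have -> : payoff f s s = INT (payoff_u f s s) by [].
rewrite (@INT_ext R f _ _ (fun u x => payoff_u_eq hf s u hs)).
apply: (INT_le hf); [exact: good_Gm|gd|].
by move=> u Du; rewrite -(payoff_u_eq hf s u hs); exact: Gm_le_pay.
Qed.

Definition hm m u := smu s u m * (Gm u - g m u).

Lemma good_hm m : good (hm m).
Proof.
apply: good_mul; first exact: good_mu.
apply: good_sub; [exact: good_Gm|exact: good_g].
Qed.

Lemma hm_ge0 m u : S m -> D u -> 0 <= hm m u.
Proof.
move=> Sm Du; apply: mulr_ge0; first by have /andP[] := mu_bnd hs Du m.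
by rewrite subr_ge0; exact: g_le_Gm.
Qed.

Lemma E1 : \sum_m (if S m then INT (hm m) else 0) =
   \sum_m (if S m then INT (fun u => smu s u m * Gm u) else 0) - payoff f s s.
Proof.
rewrite W_eq2 -sumrB; apply: eq_bigr => m _; case: (S m); last by rewrite subr0.
rewrite -INT_sub; last 2 first.
- by apply: good_mul; [exact: good_mu|exact: good_Gm].
- by apply: good_mul; [exact: good_mu|exact: good_g].
by apply: INT_ext => u _; rewrite /hm; ring.
Qed.

Lemma E2 : \sum_m (if S m then INT (fun u => smu s u m * Gm u) else 0) <= INT Gm.
Proof.
apply: (@le_trans _ _ (\sum_m INT (fun u => smu s u m * Gm u))).
  apply: ler_sum => m _; case: (S m) => //.
  apply: (INT_ge0 hf) => u Du; apply: mulr_ge0; last exact: Gm_ge0.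
  by have /andP[] := mu_bnd hs Du m.
rewrite -(INT_sum hf); last by move=> m; apply: good_mul; [exact: good_mu|exact: good_Gm].
rewrite le_eqVlt; apply/orP; left; apply/eqP; apply: INT_ext => u Du.
rewrite -mulr_suml.
by case: hs => _ [/(_ u Du) [_ ->] _]; rewrite mul1r.
Qed.

Lemma sum_h : \sum_m (if S m then INT (hm m) else 0) <= 0.
Proof. have := INTGm_le_W; have := E2; rewrite E1; lra. Qed.

Lemma W_le_Gm : payoff f s s <= INT Gm.
Proof.
have := E2; have := E1 => e.
have : 0 <= \sum_m (if S m then INT (hm m) else 0).
  apply: sumr_ge0 => m _; case: ifP => // Sm.
  by apply: (INT_ge0 hf) => u Du; exact: hm_ge0.
rewrite e; lra.
Qed.

Lemma INT_h0 m : S m -> INT (hm m) = 0.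
Proof.
move=> Sm; apply/le_anti/andP; split; last first.
  by apply: (INT_ge0 hf) => u Du; exact: hm_ge0.
apply: le_trans sum_h.
rewrite (bigD1 m) //= Sm lerDl; apply: sumr_ge0 => i _; case: ifP => // Si.
by apply: (INT_ge0 hf) => u Du; exact: hm_ge0.
Qed.

Definition PL m := INT (fun u => smu s u m * ind R (u <= half)).
Definition PR m := INT (fun u => smu s u m * ind R (half < u)).

Lemma PL0 m : S m -> a m < A -> PL m = 0.
Proof.
move=> Sm lt.
rewrite /PL (INT_pt hf (x0 := half) (g2 := fun u => smu s u m * ind R (u < half))); last 3 first.
- by apply: good_mul; [exact: good_mu|exact: good_le].
- by apply: good_mul; [exact: good_mu|exact: good_ltc].
- by move=> u _ ne; rewrite /ind lt_neqAle; case: (u <= half); rewrite ?andbT ?andbF //;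
    have -> : (u != half) by apply/eqP.
apply: (INT_ae0 hf (h := hm m)).
- exact: good_hm.
- by apply: good_mul; [exact: good_mu|exact: good_ltc].
- by move=> u Du; exact: hm_ge0.
- exact: INT_h0.
move=> u Du; rewrite /hm /ind; case: ltP => hu; last by rewrite mulr0.
have hu' : u <= half by exact: ltW.
have -> : Gm u - g m u = (a mA - a m) * (1 - 2 * u).
  by rewrite /Gm /ind hu' ltNge hu' /= /PC.g; ring.
move=> H0; rewrite mulr1; apply/eqP; move/eqP: H0; rewrite mulf_eq0 => /orP[//|].
rewrite mulf_eq0 => /orP[|] /eqP h; exfalso; lra.
Qed.

Lemma PR0 m : S m -> a mB < a m -> PR m = 0.
Proof.
move=> Sm lt.
apply: (INT_ae0 hf (h := hm m)).
- exact: good_hm.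
- by apply: good_mul; [exact: good_mu|exact: good_lt].
- by move=> u Du; exact: hm_ge0.
- exact: INT_h0.
move=> u Du; rewrite /hm /ind; case: ltP => hu; last by rewrite mulr0.
have -> : Gm u - g m u = (a m - a mB) * (2 * u - 1).
  by rewrite /Gm /ind hu leNgt hu /= /PC.g; ring.
move=> H0; rewrite mulr1; apply/eqP; move/eqP: H0; rewrite mulf_eq0 => /orP[//|].
rewrite mulf_eq0 => /orP[|] /eqP h; exfalso; lra.
Qed.

Definition p := INT (fun u => ind R (u <= half)).
Definition pr := INT (fun u => ind R (half < u)).

Lemma ind_sum (x : R) : ind R (x <= half) + ind R (half < x) = 1.
Proof. by rewrite /ind ltNge; case: (x <= half); rewrite ?addr0 ?add0r. Qed.

Lemma p_pr : p + pr = 1.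
Proof.
rewrite /p /pr -(INT_add hf); [|exact: good_le|exact: good_lt].
rewrite -[RHS](INT_one hf); apply: INT_ext => u _; exact: ind_sum.
Qed.

Lemma p_ge0 : 0 <= p.
Proof. by apply: (INT_ge0 hf) => u _; rewrite /ind; case: ifP. Qed.

Lemma pr_ge0 : 0 <= pr.
Proof. by apply: (INT_ge0 hf) => u _; rewrite /ind; case: ifP. Qed.

Lemma PLR m : PL m + PR m = q m.
Proof.
rewrite /PL /PR -(INT_add hf); last 2 first.
- by apply: good_mul; [exact: good_mu|exact: good_le].
- by apply: good_mul; [exact: good_mu|exact: good_lt].
by apply: INT_ext => u _; rewrite -mulrDr ind_sum mulr1.
Qed.

Lemma PL_ge0 m : 0 <= PL m.
Proof.
apply: (INT_ge0 hf) => u Du; apply: mulr_ge0; first by have /andP[] := mu_bnd hs Du m.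
by rewrite /ind; case: ifP.
Qed.

Lemma PR_ge0 m : 0 <= PR m.
Proof.
apply: (INT_ge0 hf) => u Du; apply: mulr_ge0; first by have /andP[] := mu_bnd hs Du m.
by rewrite /ind; case: ifP.
Qed.

Lemma PL_notS m : ~~ S m -> PL m = 0.
Proof.
move=> nS; have q0 := q_notS hf hs nS; have := PLR m; have := PL_ge0 m; have := PR_ge0 m.
rewrite q0 => h1 h2 h3; lra.
Qed.

Lemma PR_notS m : ~~ S m -> PR m = 0.
Proof.
move=> nS; have q0 := q_notS hf hs nS; have := PLR m; have := PL_ge0 m; have := PR_ge0 m.
rewrite q0 => h1 h2 h3; lra.
Qed.

Lemma sum_PL : \sum_m PL m = p.
Proof.
rewrite /PL -(INT_sum hf); last by move=> m; apply: good_mul; [exact: good_mu|exact: good_le].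
apply: INT_ext => u Du; rewrite -mulr_suml.
by case: hs => _ [/(_ u Du) [_ ->] _]; rewrite mul1r.
Qed.

Lemma sum_PR : \sum_m PR m = pr.
Proof.
rewrite /PR -(INT_sum hf); last by move=> m; apply: good_mul; [exact: good_mu|exact: good_lt].
apply: INT_ext => u Du; rewrite -mulr_suml.
by case: hs => _ [/(_ u Du) [_ ->] _]; rewrite mul1r.
Qed.

Lemma sum_PLa : \sum_m PL m * a m = A * p.
Proof.
rewrite -sum_PL mulr_sumr; apply: eq_bigr => m _.
have [Sm|nSm] := boolP (S m); last by rewrite PL_notS // !mul0r mulr0.
have := hA Sm; rewrite le_eqVlt => /orP[/eqP ->|lt]; first by rewrite mulrC.
by rewrite PL0 // mul0r mulr0.
Qed.

Lemma sum_PRa : \sum_m PR m * a m = B * pr.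
Proof.
rewrite -sum_PR mulr_sumr; apply: eq_bigr => m _.
have [Sm|nSm] := boolP (S m); last by rewrite PR_notS // !mul0r mulr0.
have := hB Sm; rewrite le_eqVlt => /orP[/eqP <-|lt]; first by rewrite mulrC.
by rewrite PR0 // mul0r mulr0.
Qed.

Definition Ls m m' : R := if S m && S m' && Lc m m' then 1 else 0.

Lemma Lc_sym m m' : Lc m m' = Lc m' m.
Proof.
rewrite /PC.Lc; apply/idP/idP => /asboolP [h1 h2]; by apply/asboolP; split.
Qed.

Lemma Ls_sym m m' : Ls m m' = Ls m' m.
Proof. by rewrite /Ls Lc_sym (andbC (S m)). Qed.

Lemma Ls_01 m m' : 0 <= Ls m m' <= 1.
Proof. by rewrite /Ls; case: ifP; rewrite ?lexx ?ler01. Qed.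

Definition T (X Y : M -> R) := \sum_m \sum_m' X m * Ls m m' * Y m'.

Lemma PXa (X : M -> R) : (forall m, ~~ S m -> X m = 0) ->
  \sum_m X m * a m = T X PL + T X PR.
Proof.
move=> hX; rewrite /T -big_split /=; apply: eq_bigr => m _.
rewrite -big_split /= /PC.a mulr_sumr; apply: eq_bigr => m' _.
have [Sm|nSm] := boolP (S m); last by rewrite hX // !mul0r addr0.
rewrite -mulrDr PLR /Ls Sm /=.
by case: (S m' && Lc m m'); rewrite ?mulr1 ?mulr0 ?mul0r.
Qed.

Lemma T_swap X Y : T X Y = T Y X.
Proof.
rewrite /T exchange_big /=; apply: eq_bigr => m _; apply: eq_bigr => m' _.
by rewrite Ls_sym; ring.
Qed.

Lemma T_ge0 X Y : (forall m, 0 <= X m) -> (forall m, 0 <= Y m) -> 0 <= T X Y.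
Proof.
move=> hX hY; apply: sumr_ge0 => m _; apply: sumr_ge0 => m' _.
have /andP[h0 _] := Ls_01 m m'.
by rewrite mulr_ge0 // mulr_ge0.
Qed.

Lemma T_le X Y : (forall m, 0 <= X m) -> (forall m, 0 <= Y m) ->
  T X Y <= (\sum_m X m) * (\sum_m Y m).
Proof.
move=> hX hY; rewrite /T mulr_suml; apply: ler_sum => m _.
rewrite mulr_sumr; apply: ler_sum => m' _.
have /andP[h0 h1] := Ls_01 m m'.
rewrite -mulrA ler_wpM2l // -{2}(mul1r (Y m')).
by apply: ler_wpM2r.
Qed.

Lemma constraint : A * p - p * p <= B * pr.
Proof.
rewrite -sum_PRa -sum_PLa (PXa PR_notS) (PXa PL_notS).
have h1 := T_ge0 PR_ge0 PR_ge0.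
have h2 := T_le PL_ge0 PL_ge0.
rewrite sum_PL in h2.
rewrite (T_swap PR PL); lra.
Qed.

Definition XL1 := INT (fun u => ind R (u <= half) * (1 - u)).
Definition XLu := INT (fun u => ind R (u <= half) * u).
Definition XR1 := INT (fun u => ind R (half < u) * (1 - u)).
Definition XRu := INT (fun u => ind R (half < u) * u).

Lemma INTGm_eq : INT Gm = A * XL1 + (1 - A) * XLu + B * XR1 + (1 - B) * XRu.
Proof.
rewrite (@INT_ext R f _ (fun u => A * (ind R (u <= half) * (1 - u)) +
   (1 - A) * (ind R (u <= half) * u) + B * (ind R (half < u) * (1 - u)) +
   (1 - B) * (ind R (half < u) * u))); last by move=> u _; rewrite /Gm /PC.g; ring.
by rewrite !(INT_add hf) ?(INT_scale hf) //; gd.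
Qed.

Lemma x_ge0 : XLu <= XL1.
Proof.
apply: (INT_le hf); [gd|gd|] => u /inD /andP[u0 u1].
rewrite /ind; case: ifP => h; last by rewrite !mul0r.
rewrite !mul1r; move: h; lra.
Qed.

Lemma y_ge0 : XR1 <= XRu.
Proof.
apply: (INT_le hf); [gd|gd|] => u /inD /andP[u0 u1].
rewrite /ind; case: ifP => h; last by rewrite !mul0r.
rewrite !mul1r; move: h; lra.
Qed.

Lemma y_le : XRu - XR1 <= pr.
Proof.
have h1 : 0 <= XR1.
  apply: (INT_ge0 hf) => u /inD /andP[u0 u1].
  by rewrite /ind; case: ifP => _; rewrite ?mul0r // mul1r; lra.
have h2 : XRu <= pr.
  apply: (INT_le hf); [gd|gd|] => u /inD /andP[u0 u1].
  by rewrite /ind; case: ifP => _; rewrite ?mul0r // mul1r.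
lra.
Qed.

Lemma main_s : payoff f s s <=
  Num.max (XL1 + p * XR1 + pr * XRu) (p * XL1 + pr * XLu + XRu).
Proof.
apply: (le_trans W_le_Gm); rewrite INTGm_eq.
have := @alg_ineq R (XL1 - XLu) (XRu - XR1) p pr A B.
have := x_ge0; have := y_ge0; have := y_le; have := p_ge0; have := pr_ge0; have := p_pr.
have := a_ge0 mB; have := a_le1 mA; have := constraint.
move=> c a1 b0 ppr pr0 p0 yl y0 x0 H.
have := H ltac:(lra) ltac:(lra) yl p0 pr0 ppr b0 a1 c.
have -> : pr = 1 - p by lra.
rewrite !le_max => /orP[h|h]; apply/orP; [left|right]; lra.
Qed.

End Main2.

End PD.
Import PD.

Module PE.


Section Bench.
Variables (R : realType) (M : finType) (f : R -> R).
Hypothesis hf : is_type_density f.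
Local Notation D := ([set` `[0%R : R, 1%R]] : set R).
Local Notation INT := (INT f).
Local Notation good := (@good R).
Local Notation half := (2^-1 : R).
Variables (mL mR : M).
Hypothesis hLR : mL != mR.

Ltac gd := repeat (first [ apply: good_sub | apply: good_add | apply: good_mul
  | apply: good_sum => ? | apply: good_le | apply: good_lt | apply: good_id
  | apply: good_cst | (apply: good_mu; assumption) ]).

Lemma mu_star_eq u m : mu_star mL mR u m =
  ind R (u <= half) * ind R (m == mL) + ind R (half < u) * ind R (m == mR).
Proof.
rewrite /mu_star /ind ltNge; case: (u <= half); rewrite ?mul1r ?mul0r ?addr0 ?add0r //.
Qed.

Lemma good_ms m : good (fun u => mu_star mL mR u m).
Proof.
rewrite (_ : (fun u => mu_star mL mR u m) = fun u =>
  ind R (u <= half) * ind R (m == mL) + ind R (half < u) * ind R (m == mR)).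
  by gd.
by apply/funext => u; rewrite mu_star_eq.
Qed.

Lemma ms_strat (xi : M -> M -> R) : (forall m m', 0 <= xi m m' <= 1) ->
  is_strategy (Strat (mu_star mL mR) xi).
Proof.
move=> hxi; split; first by move=> m; exact: (good_ms m).1.
split => // u _; split.
  by move=> m; rewrite /= mu_star_eq; apply: addr_ge0; apply: mulr_ge0; rewrite /ind; case: ifP.
rewrite /= /mu_star; case: (u <= half); exact: (sum_ind R).
Qed.

Lemma sigL_strat : is_strategy (sigma_L R mL mR).
Proof.
apply: ms_strat => m m'; rewrite /xi_L; case: ifP => _; by rewrite ?lexx ?ler01.
Qed.

Lemma sigR_strat : is_strategy (sigma_R R mL mR).
Proof.
apply: ms_strat => m m'; rewrite /xi_R; case: ifP => _; by rewrite ?lexx ?ler01.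
Qed.

Lemma K_one (sg : strat R M) m m' w : good (fun u => smu sg u m) -> good w ->
  sxi sg m m' = 1 ->
  KLw f sg m m' w = INT (fun u => smu sg u m * w u) /\ KRw f sg m m' w = 0.
Proof.
move=> gm gw h; rewrite /KLw /KRw h; split.
  by apply: INT_ext => u /inD /andP[_ u1]; rewrite /ind u1 mulr1.
rewrite -[RHS](INT0 hf); apply: INT_ext => u /inD /andP[_ u1].
by rewrite /ind ltNge u1 mulr0.
Qed.

Lemma K_zero (sg : strat R M) m m' w : good (fun u => smu sg u m) -> good w ->
  sxi sg m m' = 0 ->
  KLw f sg m m' w = 0 /\ KRw f sg m m' w = INT (fun u => smu sg u m * w u).
Proof.
move=> gm gw h; rewrite /KLw /KRw h; split.
  rewrite -[RHS](INT0 hf); apply: (INT_pt hf (x0 := 0)); [by gd; try exact: gm; try exact: gw|exact: good_cst|].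
  move=> u /inD /andP[u0 _] ne.
  have : 0 < u by rewrite lt_neqAle u0 andbT; apply/eqP => e; apply: ne.
  by move=> hu; rewrite /ind (lt_geF hu) mulr0.
apply: (INT_pt hf (x0 := 0)); [by gd; try exact: gm; try exact: gw|by gd; try exact: gm; try exact: gw|].
move=> u /inD /andP[u0 _] ne.
have : 0 < u by rewrite lt_neqAle u0 andbT; apply/eqP => e; apply: ne.
by rewrite /ind => ->; rewrite mulr1.
Qed.

Lemma sum2 (F : M -> R) : (forall m, m != mL -> m != mR -> F m = 0) ->
  \sum_m F m = F mL + F mR.
Proof.
move=> hF; rewrite (bigD1 mL) //= (bigD1 mR) /=; last by rewrite eq_sym.
rewrite big1 ?addr0 // => m /andP[h1 h2]; exact: hF.
Qed.

Lemma ms_L w : INT (fun u => mu_star mL mR u mL * w u) = INT (fun u => ind R (u <= half) * w u).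
Proof.
apply: INT_ext => u _; rewrite mu_star_eq eqxx (negbTE hLR) /ind.
by case: (u <= half); case: (half < u); ring.
Qed.

Lemma ms_R w : INT (fun u => mu_star mL mR u mR * w u) = INT (fun u => ind R (half < u) * w u).
Proof.
apply: INT_ext => u _; rewrite mu_star_eq eqxx eq_sym (negbTE hLR) /ind.
by case: (u <= half); case: (half < u); ring.
Qed.

Lemma ms_other m : m != mL -> m != mR -> forall u : R, mu_star mL mR u m = 0.
Proof. by move=> h1 h2 u; rewrite mu_star_eq /ind (negbTE h1) (negbTE h2) !mulr0 addr0. Qed.

Local Notation sL := (sigma_L R mL mR).
Local Notation sR := (sigma_R R mL mR).

Lemma KL_L m m' w : good w -> KLw f sL m m' w =
  if (m == mR) && (m' == mR) then 0 else INT (fun u => mu_star mL mR u m * w u).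
Proof.
move=> gw; case: ifP => h.
  by apply: (proj1 (K_zero (sg := sL) (m' := m') (good_ms m) gw _)); rewrite /= /xi_L h.
by apply: (proj1 (K_one (sg := sL) (m' := m') (good_ms m) gw _)); rewrite /= /xi_L h.
Qed.

Lemma KR_L m m' w : good w -> KRw f sL m m' w =
  if (m == mR) && (m' == mR) then INT (fun u => mu_star mL mR u m * w u) else 0.
Proof.
move=> gw; case: ifP => h.
  by apply: (proj2 (K_zero (sg := sL) (m' := m') (good_ms m) gw _)); rewrite /= /xi_L h.
by apply: (proj2 (K_one (sg := sL) (m' := m') (good_ms m) gw _)); rewrite /= /xi_L h.
Qed.

Lemma KL_R m m' w : good w -> KLw f sR m m' w =
  if (m == mL) && (m' == mL) then INT (fun u => mu_star mL mR u m * w u) else 0.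
Proof.
move=> gw; case: ifP => h.
  by apply: (proj1 (K_one (sg := sR) (m' := m') (good_ms m) gw _)); rewrite /= /xi_R h.
by apply: (proj1 (K_zero (sg := sR) (m' := m') (good_ms m) gw _)); rewrite /= /xi_R h.
Qed.

Lemma KR_R m m' w : good w -> KRw f sR m m' w =
  if (m == mL) && (m' == mL) then 0 else INT (fun u => mu_star mL mR u m * w u).
Proof.
move=> gw; case: ifP => h.
  by apply: (proj2 (K_one (sg := sR) (m' := m') (good_ms m) gw _)); rewrite /= /xi_R h.
by apply: (proj2 (K_zero (sg := sR) (m' := m') (good_ms m) gw _)); rewrite /= /xi_R h.
Qed.

Lemma INT_ms0 m w : m != mL -> m != mR -> INT (fun u => mu_star mL mR u m * w u) = 0.
Proof.
move=> h1 h2; rewrite -[RHS](INT0 hf); apply: INT_ext => u _.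
by rewrite ms_other // mul0r.
Qed.

Lemma good_1u : good (fun u => 1 - u).
Proof. by gd. Qed.

Lemma pL1 : INT (fun u => ind R (u <= half) * (fun=> 1 : R) u) = p f.
Proof. by apply: INT_ext => u _; rewrite mulr1. Qed.

Lemma pR1 : INT (fun u => ind R (half < u) * (fun=> 1 : R) u) = pr f.
Proof. by apply: INT_ext => u _; rewrite mulr1. Qed.

Lemma payL : payoff f sL sL = XL1 f + p f * XR1 f + pr f * XRu f.
Proof.
have hRL : (mR == mL) = false by rewrite eq_sym (negbTE hLR).
rewrite (payoff_eq hf sigL_strat).
rewrite sum2; last first.
  move=> m h1 h2; apply: big1 => m' _.
  rewrite !(KL_L _ _ good_1u) !(KL_L _ _ (good_cst 1)) !(KR_L _ _ (@good_id R)) !(KR_L _ _ (good_cst 1)).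
  rewrite !(INT_ms0 _ h1 h2) (negbTE h2) /=; ring.
rewrite !sum2; first last.
- move=> m h1 h2.
  rewrite !(KL_L _ _ good_1u) !(KL_L _ _ (good_cst 1)) !(KR_L _ _ (@good_id R)) !(KR_L _ _ (good_cst 1)).
  rewrite !(INT_ms0 _ h1 h2) (negbTE h2) /=; case: ifP => _; ring.
- move=> m h1 h2.
  rewrite !(KL_L _ _ good_1u) !(KL_L _ _ (good_cst 1)) !(KR_L _ _ (@good_id R)) !(KR_L _ _ (good_cst 1)).
  rewrite !(INT_ms0 _ h1 h2) (negbTE h2) /=; case: ifP => _; ring.
rewrite !(KL_L _ _ good_1u) !(KL_L _ _ (good_cst 1)) !(KR_L _ _ (@good_id R)) !(KR_L _ _ (good_cst 1)).
rewrite !eqxx (negbTE hLR) ?hRL /=.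
rewrite !ms_L !ms_R pL1 pR1.
rewrite /XL1 /XR1 /XRu.
have := p_pr hf; move=> e.
have -> : pr f = 1 - p f by lra.
ring.
Qed.

Lemma payR : payoff f sR sR = p f * XL1 f + pr f * XLu f + XRu f.
Proof.
have hRL : (mR == mL) = false by rewrite eq_sym (negbTE hLR).
rewrite (payoff_eq hf sigR_strat).
rewrite sum2; last first.
  move=> m h1 h2; apply: big1 => m' _.
  rewrite !(KL_R _ _ good_1u) !(KL_R _ _ (good_cst 1)) !(KR_R _ _ (@good_id R)) !(KR_R _ _ (good_cst 1)).
  rewrite !(INT_ms0 _ h1 h2) (negbTE h1) /=; ring.
rewrite !sum2; first last.
- move=> m h1 h2.
  rewrite !(KL_R _ _ good_1u) !(KL_R _ _ (good_cst 1)) !(KR_R _ _ (@good_id R)) !(KR_R _ _ (good_cst 1)).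
  rewrite !(INT_ms0 _ h1 h2) (negbTE h1) /=; case: ifP => _; ring.
- move=> m h1 h2.
  rewrite !(KL_R _ _ good_1u) !(KL_R _ _ (good_cst 1)) !(KR_R _ _ (@good_id R)) !(KR_R _ _ (good_cst 1)).
  rewrite !(INT_ms0 _ h1 h2) (negbTE h1) /=; case: ifP => _; ring.
rewrite !(KL_R _ _ good_1u) !(KL_R _ _ (good_cst 1)) !(KR_R _ _ (@good_id R)) !(KR_R _ _ (good_cst 1)).
rewrite !eqxx ?(negbTE hLR) ?hRL /=.
rewrite !ms_L !ms_R pL1 pR1.
rewrite /XL1 /XLu /XRu.
have := p_pr hf; move=> e.
have -> : pr f = 1 - p f by lra.
ring.
Qed.

End Bench.

End PE.
Import PE.

Theorem mainTheorem6 (R : realType) (M : finType) (hM : (4 <= #|M|)%N)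
  (f : R -> R) (hf : is_type_density f) (mL mR : M) (hLR : mL != mR)
  (s : strat R M) (hE : is_equilibrium f s) (hC : coordinated f s) :
  payoff f s s <= Num.max (payoff f (@sigma_L R M mL mR) (@sigma_L R M mL mR))
                      (payoff f (@sigma_R R M mL mR) (@sigma_R R M mL mR)).
Proof.
have hs := hE.1.
have [mA [SmA hA]] := ext_max hf hs.
have [mB [SmB hB]] := ext_min hf hs.
have := main_s hf hs hC hE SmA hA SmB hB.
by rewrite (payL hf hLR) (payR hf hLR).
Qed.
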